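(* Let $R$ be a ring with a set of local units $E$ and let $E'\subseteq E$ be closed under joins $e_1\vee e_2=e_1+e_2-e_1e_2$ and meets $e_1\wedge e_2=e_1e_2$, ordered by $e_i\le e_j\iff e_ie_j=e_i$. For $e_i\le e_j$ let $\varphi_{ij}:Re_i\hookrightarrow Re_j$ be the inclusion, $\psi_{ji}:Re_j\to Re_i$, $m\mapsto me_i$, and $\phi_{ij}:\mathrm{End}_R(Re_i)^{\mathrm{op}}\to\mathrm{End}_R(Re_j)^{\mathrm{op}}$, $f\mapsto\varphi_{ij}\circ f\circ\psi_{ji}$; let $h_{ij}:e_iRe_i\hookrightarrow e_jRe_j$ be the inclusion. Then the directed systems $\langle\{\mathrm{End}_R(Re_i)^{\mathrm{op}}\}_{e_i\in E'},\{\phi_{ij}\}\rangle$ and $\langle\{e_iRe_i\}_{e_i\in E'},\{h_{ij}\}\rangle$ are isomorphic (via $f\mapsto f(e_i)$), and consequently $\varinjlim_{e_i\in E'}\mathrm{End}_R(Re_i)^{\mathrm{op}}\cong\bigcup_{e_i\in E'}e_iRe_i$ as rings with local units.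
   Context: A ring with local units is a ring $R$ with a set $E$ of pairwise commuting idempotents such that $R=\bigcup_{e\in E}eRe$. $\mathrm{End}_R(M)$ is the ring of left $R$-module endomorphisms with multiplication given by composition, and $^{\mathrm{op}}$ denotes the opposite ring. *)

(* Defs.v *)
(* A "ring" here is a possibly non-unital associative ring:
   an additive group V (zmodType) with a bilinear associative multiplication. *)
From HB Require Import structures.
From mathcomp Require Import all_boot all_algebra.
Set Implicit Arguments. Unset Strict Implicit. Unset Printing Implicit Defensive.
Import GRing.Theory.
Local Open Scope ring_scope.

Section Defs.
Variables (V : zmodType) (mul : V -> V -> V).
Local Notation "x ** y" := (mul x y) (at level 40, left associativity).

Definition rng_axioms :=
  (forall x y z, x ** (y ** z) = (x ** y) ** z) /\
  (forall x y z, x ** (y + z) = x ** y + x ** z) /\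
  (forall x y z, (x + y) ** z = x ** z + y ** z).

Definition idempotent (e : V) := e ** e = e.
Definition in_corner (e r : V) := exists s, r = (e ** s) ** e.
Definition local_units (E : V -> Prop) :=
  (forall e, E e -> idempotent e) /\
  (forall e1 e2, E e1 -> E e2 -> e1 ** e2 = e2 ** e1) /\
  (forall r, exists e, E e /\ in_corner e r).

Definition ejoin (e1 e2 : V) := e1 + e2 - e1 ** e2.
Definition emeet (e1 e2 : V) := e1 ** e2.
Definition ele (e1 e2 : V) := e1 ** e2 = e1.

Definition in_Re (e x : V) := exists r, x = r ** e.

(* f (restricted to Re) is a left R-module endomorphism of Re.
   Elements of End_R(Re) are represented by functions V -> V, two of them
   being identified when they agree on Re (End_eq). *)
Definition is_End (e : V) (f : V -> V) :=
  (forall x, in_Re e x -> in_Re e (f x)) /\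
  (forall x y, in_Re e x -> in_Re e y -> f (x + y) = f x + f y) /\
  (forall r x, in_Re e x -> f (r ** x) = r ** f x).
Definition End_eq (e : V) (f g : V -> V) := forall x, in_Re e x -> f x = g x.

Definition End_add (f g : V -> V) := fun x => f x + g x.
Definition End_opmul (f g : V -> V) := fun x => g (f x).
Definition End_one := fun x : V => x.

(* phi_ij f = varphi_ij o f o psi_ji, psi_ji m = m e_i, varphi_ij inclusion *)
Definition psi (ei m : V) := m ** ei.
Definition phi (ei : V) (f : V -> V) := fun m => f (psi ei m).

Definition theta (ei : V) (f : V -> V) := f ei.

Definition phi_directed_system (E' : V -> Prop) :=
  (forall ei ej f, E' ei -> E' ej -> ele ei ej -> is_End ei f ->
     is_End ej (phi ei f)) /\
  (forall ei ej f g, E' ei -> E' ej -> ele ei ej -> is_End ei f -> is_End ei g ->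
     End_eq ej (phi ei (End_add f g)) (End_add (phi ei f) (phi ei g)) /\
     End_eq ej (phi ei (End_opmul f g)) (End_opmul (phi ei f) (phi ei g))) /\
  (forall ei f, E' ei -> is_End ei f -> End_eq ei (phi ei f) f) /\
  (forall ei ej ek f, E' ei -> E' ej -> E' ek -> ele ei ej -> ele ej ek ->
     is_End ei f -> End_eq ek (phi ej (phi ei f)) (phi ei f)).

Definition directed_systems_iso (E' : V -> Prop) :=
  (forall ei, E' ei ->
     (forall f, is_End ei f -> in_corner ei (theta ei f)) /\
     (forall f g, is_End ei f -> is_End ei g ->
        (theta ei f = theta ei g <-> End_eq ei f g)) /\
     (forall r, in_corner ei r -> exists f, is_End ei f /\ theta ei f = r) /\
     (forall f g, is_End ei f -> is_End ei g ->
        is_End ei (End_add f g) /\ is_End ei (End_opmul f g) /\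
        theta ei (End_add f g) = theta ei f + theta ei g /\
        theta ei (End_opmul f g) = theta ei f ** theta ei g) /\
     is_End ei End_one /\ theta ei End_one = ei) /\
  (forall ei ej f, E' ei -> E' ej -> ele ei ej -> is_End ei f ->
     theta ej (phi ei f) = theta ei f).

(* The direct limit of End_R(Re_i)^op over E': representatives are pairs
   (e_i, f) with f in End_R(Re_i); equivalence and operations are the
   standard ones for a direct limit over the directed poset (E', <=). *)
Record dl_elt := DL { dl_idx : V; dl_fn : V -> V }.
Definition dl_ok (E' : V -> Prop) (a : dl_elt) := E' (dl_idx a) /\ is_End (dl_idx a) (dl_fn a).
Definition dl_eq (E' : V -> Prop) (a b : dl_elt) :=
  exists ek, E' ek /\ ele (dl_idx a) ek /\ ele (dl_idx b) ek /\
    End_eq ek (phi (dl_idx a) (dl_fn a)) (phi (dl_idx b) (dl_fn b)).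
Definition dl_add (a b : dl_elt) :=
  DL (ejoin (dl_idx a) (dl_idx b))
     (End_add (phi (dl_idx a) (dl_fn a)) (phi (dl_idx b) (dl_fn b))).
Definition dl_mul (a b : dl_elt) :=
  DL (ejoin (dl_idx a) (dl_idx b))
     (End_opmul (phi (dl_idx a) (dl_fn a)) (phi (dl_idx b) (dl_fn b))).
Definition dl_unit (e : V) := DL e End_one.
Definition Theta (a : dl_elt) := dl_fn a (dl_idx a).

Definition corner_union (E' : V -> Prop) (r : V) := exists e, E' e /\ in_corner e r.

Definition colimit_iso (E' : V -> Prop) :=
  (forall a b, dl_ok E' a -> dl_ok E' b -> (dl_eq E' a b <-> Theta a = Theta b)) /\
  (forall a, dl_ok E' a -> corner_union E' (Theta a)) /\
  (forall r, corner_union E' r -> exists a, dl_ok E' a /\ Theta a = r) /\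
  (forall a b, dl_ok E' a -> dl_ok E' b ->
     dl_ok E' (dl_add a b) /\ dl_ok E' (dl_mul a b) /\
     Theta (dl_add a b) = Theta a + Theta b /\
     Theta (dl_mul a b) = Theta a ** Theta b) /\
  (forall e, E' e -> dl_ok E' (dl_unit e) /\ Theta (dl_unit e) = e).
End Defs.

(* Main.v *)
Require Import Defs.
From mathcomp Require Import all_boot all_algebra.
Import GRing.Theory.
Local Open Scope ring_scope.
Set Implicit Arguments. Unset Strict Implicit.

Section Aux.
Variables (V : zmodType) (mul : V -> V -> V).
Hypothesis HR : rng_axioms mul.
Local Notation "x ** y" := (mul x y) (at level 40, left associativity).

Lemma mA x y z : x ** (y ** z) = (x ** y) ** z. Proof. by case: HR. Qed.
Lemma mDr x y z : x ** (y + z) = x ** y + x ** z. Proof. by case: HR => _ []. Qed.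
Lemma mDl x y z : (x + y) ** z = x ** z + y ** z. Proof. by case: HR => _ []. Qed.
Lemma mr0 x : x ** 0 = 0.
Proof. have H := mDr x 0 0; rewrite addr0 in H.
apply: (@addrI _ (x ** 0)); by rewrite addr0 -H. Qed.
Lemma mrN x y : x ** (- y) = - (x ** y).
Proof. apply: (@addrI _ (x ** y)); by rewrite -mDr !subrr mr0. Qed.
Lemma mBr x y z : x ** (y - z) = x ** y - x ** z.
Proof. by rewrite mDr mrN. Qed.

Lemma inRe_fix e x : Defs.idempotent mul e -> in_Re mul e x -> x ** e = x.
Proof. move=> He [r ->]; by rewrite -mA He. Qed.
Lemma inRe_e e : Defs.idempotent mul e -> in_Re mul e e.
Proof. move=> He; by exists e. Qed.
Lemma End_lin e f r : Defs.idempotent mul e -> is_End mul e f -> f (r ** e) = r ** f e.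
Proof. move=> He [_ [_ H]]; apply: H; exact: inRe_e. Qed.
Lemma End_in e f : Defs.idempotent mul e -> is_End mul e f -> f e ** e = f e.
Proof. move=> He [H _]; apply: inRe_fix => //; apply: H; exact: inRe_e. Qed.
Lemma End_le ei ej f : Defs.idempotent mul ei -> Defs.idempotent mul ej -> ele mul ei ej ->
  is_End mul ei f -> is_End mul ej (phi mul ei f).
Proof.
move=> Hi Hj Hle Hf; split; [|split].
- move=> x _; rewrite /phi /psi (@End_lin _ _ x Hi Hf); exists (x ** f ei).
  have K : f ei ** ej = f ei by rewrite -(End_in Hi Hf) -mA Hle.
  by rewrite -mA K.
- move=> x y _ _; rewrite /phi /psi mDl; case: Hf => _ [H _]; apply: H; [by exists x | by exists y].
- move=> r x _; rewrite /phi /psi (@End_lin _ _ (r ** x) Hi Hf) (@End_lin _ _ x Hi Hf); by rewrite mA.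
Qed.
Lemma End_addE e f g : Defs.idempotent mul e -> is_End mul e f -> is_End mul e g ->
  is_End mul e (End_add f g).
Proof.
move=> He [f1 [f2 f3]] [g1 [g2 g3]]; split; [|split].
- move=> x Hx; rewrite /End_add; exists (f x + g x).
  by rewrite mDl !inRe_fix //; [apply: g1 | apply: f1].
- move=> x y Hx Hy; rewrite /End_add f2 // g2 //.
  by rewrite -!addrA; congr (_ + _); rewrite addrCA.
- move=> r x Hx; by rewrite /End_add f3 // g3 // mDr.
Qed.
Lemma End_mulE e f g : Defs.idempotent mul e -> is_End mul e f -> is_End mul e g ->
  is_End mul e (End_opmul f g).
Proof.
move=> He [f1 [f2 f3]] [g1 [g2 g3]]; split; [|split].
- move=> x Hx; rewrite /End_opmul; by apply: g1; apply: f1.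
- move=> x y Hx Hy; rewrite /End_opmul f2 // g2 //; by apply: f1.
- move=> r x Hx; rewrite /End_opmul f3 // g3 //; by apply: f1.
Qed.
Lemma End_oneE e : Defs.idempotent mul e -> is_End mul e (@End_one V).
Proof. move=> He; split; [|split] => //. Qed.
Lemma End_rmul e r : Defs.idempotent mul e -> in_corner mul e r ->
  is_End mul e (fun x => x ** r).
Proof.
move=> He [s ->]; split; [|split].
- move=> x _; exists (x ** (e ** s)); by rewrite mA.
- move=> x y _ _; by rewrite mDl.
- move=> r0 x _; by rewrite (mA r0).
Qed.
End Aux.
Arguments End_lin {V mul e f} r.

Theorem theorem3p13 (V : zmodType) (mul : V -> V -> V) (E E' : V -> Prop) :
  rng_axioms mul ->
  local_units mul E ->
  (forall e, E' e -> E e) ->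
  (forall e1 e2, E' e1 -> E' e2 -> E' (ejoin mul e1 e2) /\ E' (emeet mul e1 e2)) ->
  phi_directed_system mul E' /\ directed_systems_iso mul E' /\ colimit_iso mul E'.
Proof.
move=> HR [Hid [Hc _]] HE Hcl.
have Id : forall e, E' e -> Defs.idempotent mul e by move=> e /HE /Hid.
have C : forall e1 e2, E' e1 -> E' e2 -> mul e1 e2 = mul e2 e1.
  by move=> e1 e2 /HE H1 /HE H2; apply: Hc.
have leJ : forall a b, E' a -> E' b -> ele mul a (ejoin mul a b) /\ ele mul b (ejoin mul a b).
  move=> a b Ha Hb; rewrite /ele /ejoin; split.
  - rewrite (mBr HR) (mDr HR) (mA HR) (Id a Ha).
    by rewrite -addrA subrr addr0.
  - rewrite (mBr HR) (mDr HR) (mA HR) (C b a Hb Ha) -(mA HR) (Id b Hb).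
    by rewrite addrC addrA addNr add0r.
have thphi : forall ei ej f, E' ei -> E' ej -> ele mul ei ej ->
    phi mul ei f ej = f ei.
  by move=> ei ej f Hi Hj Hle; rewrite /phi /psi (C ej ei Hj Hi) Hle.
have phix : forall ei f x, E' ei -> is_End mul ei f -> phi mul ei f x = mul x (f ei).
  move=> ei f x Hi Hf; rewrite /phi /psi; exact: (End_lin x (Id _ Hi) Hf).
split; [|split].
- split; [|split; [|split]].
  + move=> ei ej f Hi Hj; exact: (End_le HR (Id _ Hi) (Id _ Hj)).
  + move=> ei ej f g Hi Hj Hle Hf Hg; split => x Hx //.
    rewrite /phi /psi /End_opmul; congr g.
    symmetry; apply: (inRe_fix HR (Id _ Hi)); case: Hf => H _; apply: H; by exists x.
  + move=> ei f Hi Hf x Hx; by rewrite /phi /psi (inRe_fix HR (Id _ Hi)).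
  + move=> ei ej ek f Hi Hj Hk Hij Hjk Hf x Hx.
    by rewrite /phi /psi -(mA HR) (C ej ei Hj Hi) Hij.
- split.
  + move=> ei Hi; have He := Id _ Hi; split; [|split; [|split; [|split]]].
    * move=> f Hf; exists (theta ei f); rewrite /theta.
      by rewrite -(mA HR) (End_in HR He Hf) -{1}He (End_lin ei He Hf).
    * move=> f g Hf Hg; split.
      - rewrite /theta => Heq x [r ->]; by rewrite (End_lin r He Hf) (End_lin r He Hg) Heq.
      - move=> Heq; apply: Heq; exact: (inRe_e He).
    * move=> r Hr; exists (fun x => mul x r); split; first exact: (End_rmul HR He).
      by case: Hr => s ->; rewrite /theta !(mA HR) He.
    * move=> f g Hf Hg; split; first exact: (End_addE HR He Hf Hg).
      split; first exact: (End_mulE He Hf Hg).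
      split => //.
      rewrite /theta /End_opmul -{1}(End_in HR He Hf); exact: (End_lin _ He Hg).
    * by split; [exact: (End_oneE He) |].
  + move=> ei ej f Hi Hj Hle _; rewrite /theta; exact: thphi.
- split; [|split; [|split; [|split]]].
  + case=> ea fa [eb fb] [/= Ha Hfa] [/= Hb Hfb]; rewrite /Theta /=; split.
    * case=> ek [Hk [/= Hak [/= Hbk Heq]]].
      rewrite -(thphi ea ek fa) // -(thphi eb ek fb) //; apply: Heq.
      exact: (inRe_e (Id _ Hk)).
    * move=> Heq; exists (ejoin mul ea eb); have [Hj _] := Hcl _ _ Ha Hb.
      have [H1 H2] := leJ _ _ Ha Hb.
      do 3 split => //=.
      by move=> x _; rewrite !phix // Heq.
  + case=> ea fa [/= Ha Hfa]; exists ea; split => //; rewrite /Theta /=.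
    have He := Id _ Ha.
    exists (fa ea).
    by rewrite -(mA HR) (End_in HR He Hfa) -{1}He (End_lin ea He Hfa).
  + move=> r [e [He Hr]]; exists (DL e (fun x => mul x r)); split.
    * split => //=; exact: (End_rmul HR (Id _ He)).
    * by rewrite /Theta /=; case: Hr => s ->; rewrite !(mA HR) (Id _ He).
  + case=> ea fa [eb fb] [/= Ha Hfa] [/= Hb Hfb].
    have [Hj _] := Hcl _ _ Ha Hb; have [H1 H2] := leJ _ _ Ha Hb.
    have Ea := End_le HR (Id _ Ha) (Id _ Hj) H1 Hfa.
    have Eb := End_le HR (Id _ Hb) (Id _ Hj) H2 Hfb.
    split; [|split; [|split]].
    * split => //=; exact: (End_addE HR (Id _ Hj) Ea Eb).
    * split => //=; exact: (End_mulE (Id _ Hj) Ea Eb).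
    * rewrite /Theta /= /End_add; by rewrite (thphi ea _ fa) // (thphi eb _ fb).
    * rewrite /Theta /= /End_opmul (thphi ea _ fa) //.
      by rewrite /phi /psi (End_lin (fa ea) (Id _ Hb) Hfb).
  + move=> e He; split; first by split => //=; exact: (End_oneE (Id _ He)).
    by [].
Qed.
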